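(* Given a parity game with $d$ priorities, $n$ vertices and $m$ edges, and a set of tangles $T$, computing the top-down $\alpha$-maximal decomposition of the game (defined in the context) runs in time $O(dm+dn\lvert T\rvert)$.
   Context: Parity games: $\mathcal{G}=(V_0,V_1,E,\mathrm{pr})$, $V=V_0\cup V_1$ finite, partitioned into vertices of Even ($0$) and Odd ($1$); $E\subseteq V\times V$ with every vertex having a successor; $\mathrm{pr}:V\to\{0,\dots,d\}$. $E(u)=\{v:(u,v)\in E\}$, $\mathrm{pr}(U)=\max_{u\in U}\mathrm{pr}(u)$, $\mathrm{pr}^{-1}(p)$ the set of vertices of priority $p$, $\overline{\alpha}=1-\alpha$. A cycle is won by $\alpha$ if its highest priority has parity $\alpha$. A strategy of $\alpha$ is a partial function $\sigma$ on $V_\alpha$ with $\sigma(v)\in E(v)$. For $U\subseteq V$, $\mathcal{G}\setminus U$ is the subgame with vertices $V\setminus U$ and edges $E\cap((V\setminus U)\times(V\setminus U))$. A $p$-tangle is a nonempty $U\subseteq V$ with $p=\mathrm{pr}(U)$ such that for $\alpha\equiv p\pmod 2$ there is a strategy $\sigma:U\cap V_\alpha\to U$ (witness strategy $\sigma_T(U)$) with $(U,E\cap(\sigma\cup((U\cap V_{\overline{\alpha}})\times U)))$ strongly connected and all its cycles won by $\alpha$ (''won by $\alpha$''). For a tangle $t$ won by $\alpha$ in a game with edge set $E$, $E_T(t)=\{v\notin t:\exists u\in t\cap V_{\overline{\alpha}},(u,v)\in E\}$. $T_\alpha$ denotes the tangles of $T$ won by $\alpha$; for a subgame $\mathcal{G}'$,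 $T\cap\mathcal{G}'$ denotes the tangles of $T$ contained in its vertex set. Tangle attractor: for a game $\mathcal{G}$ with vertices $V$, tangles $T$, player $\alpha$ and $A\subseteq V$, $\mathit{TAttr}^{\mathcal{G},T}_\alpha(A)$ is the least $Z\supseteq A$ containing every $v\in V_\alpha$ with $E(v)\cap Z\neq\emptyset$, every $v\in V_{\overline{\alpha}}$ with $E(v)\subseteq Z$, and every vertex of every $t\in T_\alpha$ with $\emptyset\neq E_T(t)\subseteq Z$ ($E_T$ computed in $\mathcal{G}$), computed together with a strategy of $\alpha$ (each individually attracted $\alpha$-vertex is mapped to a successor in $Z$, each $\alpha$-vertex of $A$ to a successor in $Z$ once one exists, and the $\alpha$-vertices of an attracted tangle $t$ not yet having a strategy get $\sigma_T(t)$). Top-down $\alpha$-maximal decomposition of $\mathcal{G}$ w.r.t. $T$: starting with no regions, repeatedly let $\mathcal{G}'$ be $\mathcal{G}$ minus all vertices in already computed regions, $p=\mathrm{pr}(\mathcal{G}')$, $\alpha=p\bmod 2$, and compute the next region $\mathit{TAttr}^{\mathcal{G}',T\cap\mathcal{G}'}_\alpha(\mathrm{pr}^{-1}(p)\cap V(\mathcal{G}'))$, until every vertex lies in a region. *)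

(* Defs.v *)
From mathcomp Require Import all_boot.
Set Implicit Arguments. Unset Strict Implicit. Unset Printing Implicit Defensive.

(*   own v : bool    : owner of v; false = Even (player 0), true = Odd (1)    *)
(*   a player alpha is a bool; alpha = odd p is "p mod 2".                  *)
(*   Tangles are indexed by 'I_k: tv i lists the vertices of tangle i,       *)
(*   tsig i its witness strategy sigma_T, tesc i its escape set E_T (in G).  *)

Definition updf {I : eqType} {X : Type} (f : I -> X) (i : I) (x : X) : I -> X :=
  fun j => if j == i then x else f j.

Section Spec.
Variables (n : nat) (own : 'I_n -> bool) (pr : 'I_n -> nat)
          (succ : 'I_n -> seq 'I_n).
Local Notation V := 'I_n.

Definition prmax (S : {set V}) : nat := \max_(v in S) pr v.

Definition nedges : nat := \sum_(v : V) size (succ v).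

Definition valid_game (d : nat) : Prop :=
  (forall v, pr v <= d) /\ (forall v, succ v != [::]) /\ (forall v, uniq (succ v)).

(* edge relation of (S, E ∩ (sigma ∪ ((S ∩ V_abar) × S))) for a player a *)
Definition tangle_rel (S : {set V}) (a : bool) (sg : V -> V) : rel V :=
  fun u v => [&& u \in S, v \in S &
              if own u == a then v == sg u else v \in succ u].

(* p-tangle with witness strategy sg (only its values on S ∩ V_alpha matter) *)
Definition is_tangle (S : {set V}) (sg : V -> V) : Prop :=
  let a := odd (prmax S) in
  [/\ S != set0,
      (forall u, u \in S -> own u = a -> sg u \in S /\ sg u \in succ u),
      (forall u v, u \in S -> v \in S -> connect (tangle_rel S a sg) u v) &
      (forall c : seq V, c != [::] -> cycle (tangle_rel S a sg) c ->
         odd (\max_(v <- c) pr v) = a)].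

Definition tangle_esc (U S : {set V}) (a : bool) : {set V} :=
  [set v in U | (v \notin S) &&
     [exists u in S, (own u != a) && (v \in succ u)]].

Variables (k : nat) (tv : 'I_k -> seq V) (tsig : 'I_k -> V -> V).

Definition tset (i : 'I_k) : {set V} := [set x in tv i].

Definition astate := ({set V} * (V -> option V))%type.

(* one step of the tangle attractor TAttr^{G[U], T ∩ G[U]}_a (A), computed
   together with a (partial) strategy of a *)
Inductive attr_step (U A : {set V}) (a : bool) : astate -> astate -> Prop :=
| AttrAlpha (Z : {set V}) (s : V -> option V) v u :
    v \in U -> v \notin Z -> own v = a -> u \in Z -> u \in succ v ->
    attr_step U A a (Z, s) (v |: Z, updf s v (Some u))
| AttrOpp (Z : {set V}) (s : V -> option V) v :
    v \in U -> v \notin Z -> own v = ~~ a ->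
    (forall u, u \in U -> u \in succ v -> u \in Z) ->
    attr_step U A a (Z, s) (v |: Z, s)
| AttrA (Z : {set V}) (s : V -> option V) v u :
    v \in A -> own v = a -> s v = None -> u \in Z -> u \in succ v ->
    attr_step U A a (Z, s) (Z, updf s v (Some u))
| AttrTangle (Z : {set V}) (s : V -> option V) (i : 'I_k) :
    tset i \subset U -> odd (prmax (tset i)) = a ->
    tangle_esc U (tset i) a != set0 -> tangle_esc U (tset i) a \subset Z ->
    attr_step U A a (Z, s)
      (tset i :|: Z,
       fun v => if [&& v \in tset i, own v == a & s v == None]
                then Some (tsig i v) else s v).

Inductive attr_reach (U A : {set V}) (a : bool) : astate -> astate -> Prop :=
| AttrRefl st : attr_reach U A a st st
| AttrTrans st1 st2 st3 :
    attr_step U A a st1 st2 -> attr_reach U A a st2 st3 -> attr_reach U A a st1 st3.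

Definition tattr (U A : {set V}) (a : bool) (Z : {set V}) (s : V -> option V) : Prop :=
  attr_reach U A a (A, fun _ => None) (Z, s) /\
  (forall Z' s', attr_step U A a (Z, s) (Z', s') -> Z' = Z /\ s' =1 s).

(* top-down a-maximal decomposition of the subgame with vertex set U:
   list of regions (as lists of vertices) with their strategies *)
Inductive topdown : {set V} -> seq (seq V * (V -> option V)) -> Prop :=
| TDnil : topdown set0 [::]
| TDcons (U : {set V}) (r : seq V) (s : V -> option V) rest :
    U != set0 ->
    tattr U [set v in U | pr v == prmax U] (odd (prmax U)) [set x in r] s ->
    topdown (U :\: [set x in r]) rest ->
    topdown U ((r, s) :: rest).

Variable tesc : 'I_k -> seq V.

Definition valid_tangles : Prop :=
  (forall i, [/\ uniq (tv i), is_tangle (tset i) (tsig i), uniq (tesc i) &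
                 [set x in tesc i] = tangle_esc setT (tset i) (odd (prmax (tset i)))])
  /\ (forall i j, tset i = tset j -> i = j).

End Spec.

(* The algorithm, in an explicit unit-cost model: every function returns its *)
(* result together with the number of elementary steps it performs.  Arrays *)
(* indexed by vertices / tangles are modelled by functions; a read or write *)
(* of one cell, a comparison, an arithmetic operation or a list cons/uncons *)
(* costs O(1); every loop iteration is charged at least one step; allocating *)
(* an array of size N is charged N steps.                                    *)

Definition cfold {A S : Type} (f : S -> A -> S * nat) (l : seq A) (s0 : S) : S * nat :=
  foldl (fun sc a => let: (s', c') := f sc.1 a in (s', sc.2 + c'.+1)) (s0, 0) l.

Section Alg.
Variables (n k : nat) (own : 'I_n -> bool) (pr : 'I_n -> nat)
          (succ : 'I_n -> seq 'I_n) (tv tesc : 'I_k -> seq 'I_n)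
          (tsig : 'I_k -> 'I_n -> 'I_n).
Local Notation V := 'I_n.
Local Notation K := 'I_k.

Definition preds_comp : (V -> seq V) * nat :=
  cfold (fun P u => cfold (fun P v => (updf P v (u :: P v), 0)) (succ u) P)
        (enum V) (fun _ => [::]).

Record rstate := RS {
  inZ : V -> bool; sgm : V -> option V; cnt : V -> nat;
  tc : K -> nat; tact : K -> bool; tix : V -> seq K;
  que : seq V; reg : seq V }.

Definition set_sgm st v x :=
  RS (inZ st) (updf (sgm st) v x) (cnt st) (tc st) (tact st) (tix st) (que st) (reg st).
Definition set_cnt st v x :=
  RS (inZ st) (sgm st) (updf (cnt st) v x) (tc st) (tact st) (tix st) (que st) (reg st).
Definition set_tc st i x :=
  RS (inZ st) (sgm st) (cnt st) (updf (tc st) i x) (tact st) (tix st) (que st) (reg st).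
Definition set_tact st i x :=
  RS (inZ st) (sgm st) (cnt st) (tc st) (updf (tact st) i x) (tix st) (que st) (reg st).
Definition set_tix st t :=
  RS (inZ st) (sgm st) (cnt st) (tc st) (tact st) t (que st) (reg st).
Definition set_que st q :=
  RS (inZ st) (sgm st) (cnt st) (tc st) (tact st) (tix st) q (reg st).
Definition push st v :=
  RS (updf (inZ st) v true) (sgm st) (cnt st) (tc st) (tact st) (tix st)
     (v :: que st) (v :: reg st).

Section Region.
Variables (P : V -> seq V) (rem : V -> bool).

Definition maxpr : nat * nat :=
  cfold (fun p v => (if rem v then maxn p (pr v) else p, 0)) (enum V) 0.

Variables (p : nat).
Local Notation a := (odd p).

Definition st0 : rstate :=
  RS (fun _ => false) (fun _ => None) (fun _ => 0) (fun _ => 0) (fun _ => false)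
     (fun _ => [::]) [::] [::].

Definition init_vertices (st : rstate) : rstate * nat :=
  cfold (fun st v =>
    if rem v then
      let: (c, cc) := cfold (fun c u => (if rem u then c.+1 else c, 0)) (succ v) 0 in
      let st := set_cnt st v c in
      (if pr v == p then push st v else st, cc)
    else (st, 0)) (enum V) st.

Definition init_tangles (st : rstate) : rstate * nat :=
  cfold (fun st i =>
    let: (inG, c1) := cfold (fun b v => (b && rem v, 0)) (tv i) true in
    let: (tp, c2) := cfold (fun q v => (maxn q (pr v), 0)) (tv i) 0 in
    if inG && (odd tp == a) then
      let: (ct, c3) := cfold (fun ct v =>
          if rem v then ((ct.1.+1, updf ct.2 v (i :: ct.2 v)), 0) else (ct, 0))
          (tesc i) (0, tix st) in
      let st := set_tix st ct.2 in
      let st := set_tc st i ct.1 in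
      (set_tact st i (ct.1 != 0), c1 + c2 + c3)
    else (st, c1 + c2)) (enum K) st.

Definition hpred (w u : V) (st : rstate) : rstate :=
  if rem u then
    if ~~ inZ st u then
      if own u == a then push (set_sgm st u (Some w)) u
      else let c := (cnt st u).-1 in
           if c == 0 then push (set_cnt st u 0) u else set_cnt st u c
    else if (own u == a) && (sgm st u == None) then set_sgm st u (Some w) else st
  else st.

Definition hvert (i : K) (v : V) (st : rstate) : rstate :=
  let st := if (own v == a) && (sgm st v == None)
            then set_sgm st v (Some (tsig i v)) else st in
  if ~~ inZ st v then push st v else st.

Definition htan (st : rstate) (i : K) : rstate * nat :=
  let c := (tc st i).-1 in
  let st := set_tc st i c in
  if (c == 0) && tact st i then
    cfold (fun st v => (hvert i v st, 0)) (tv i) (set_tact st i false)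
  else (st, 0).

Definition handle (w : V) (st : rstate) : rstate * nat :=
  let: (st1, c1) := cfold (fun st u => (hpred w u st, 0)) (P w) st in
  let: (st2, c2) := cfold htan (tix st1 w) st1 in
  (st2, c1 + c2).

Fixpoint process (fuel : nat) (st : rstate) : rstate * nat :=
  match fuel with
  | 0 => (st, 0)
  | f.+1 =>
    match que st with
    | [::] => (st, 1)
    | w :: q =>
      let: (st1, c1) := handle w (set_que st q) in
      let: (st2, c2) := process f st1 in
      (st2, c1 + c2 + 1)
    end
  end.

End Region.

Definition region (P : V -> seq V) (rem : V -> bool)
  : (seq V * (V -> option V) * (V -> bool)) * nat :=
  let: (p, c0) := maxpr rem in
  let: (st1, c1) := init_vertices rem p st0 in
  let: (st2, c2) := init_tangles rem p st1 in
  let: (st3, c3) := process P rem p n.+1 st2 in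
  let: (rem', c4) := cfold (fun r v => (updf r v false, 0)) (reg st3) rem in
  ((reg st3, sgm st3, rem'), c0 + (n + k) + c1 + c2 + c3 + c4).

Fixpoint td_loop (fuel : nat) (P : V -> seq V) (rem : V -> bool)
  : seq (seq V * (V -> option V)) * nat :=
  match fuel with
  | 0 => ([::], 0)
  | f.+1 =>
    let: (ne, c0) := cfold (fun b v => (b || rem v, 0)) (enum V) false in
    if ~~ ne then ([::], c0.+1) else
    let: (rs, c1) := region P rem in
    let: (r, s, rem') := rs in
    let: (rest, c2) := td_loop f P rem' in
    ((r, s) :: rest, c0 + c1 + c2 + 1)
  end.

Definition topdown_alg : seq (seq V * (V -> option V)) * nat :=
  let: (P, c0) := preds_comp in
  let: (out, c1) := td_loop n.+1 P (fun _ => true) in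
  (out, c0 + n + c1).

End Alg.

(* Main.v *)
Require Import Defs.
From mathcomp Require Import all_boot.
From Stdlib Require Import FunctionalExtensionality Lia.
From mathcomp Require Import zify.
Set Implicit Arguments. Unset Strict Implicit. Unset Printing Implicit Defensive.
Set Warnings "-notation-overridden".

Lemma cfold_rcons A S (f : S -> A -> S * nat) l a s0 :
  cfold f (rcons l a) s0 =
  ((f (cfold f l s0).1 a).1, (cfold f l s0).2 + (f (cfold f l s0).1 a).2.+1).
Proof.
rewrite /cfold foldl_rcons.
by case: (foldl _ _ l) => s c /=; case: (f s a).
Qed.

Lemma cfold_ind A S (f : S -> A -> S * nat) l s0 (P : seq A -> S -> nat -> Prop) :
  P [::] s0 0 ->
  (forall l1 a l2 s c, l = l1 ++ a :: l2 -> P l1 s c ->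
      P (rcons l1 a) (f s a).1 (c + (f s a).2.+1)) ->
  P l (cfold f l s0).1 (cfold f l s0).2.
Proof.
move=> H0 HS.
suff: forall l1 l2, l = l1 ++ l2 -> P l1 (cfold f l1 s0).1 (cfold f l1 s0).2.
  by move/(_ l [::]); rewrite cats0; apply.
elim/last_ind => [|l1 a IH] l2 E; first exact: H0.
rewrite cfold_rcons; apply: (HS l1 a l2); first by rewrite E cat_rcons.
by apply: (IH (a :: l2)); rewrite E cat_rcons.
Qed.

Lemma cfold_fst A S (f : S -> A -> S * nat) l s0 :
  (cfold f l s0).1 = foldl (fun s a => (f s a).1) s0 l.
Proof.
elim/last_ind: l => [|l a IH] //; by rewrite cfold_rcons foldl_rcons /= IH.
Qed.

Lemma cfold_cost0 A S (f : S -> A -> S * nat) l s0 :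
  (forall s a, (f s a).2 = 0) -> (cfold f l s0).2 = size l.
Proof.
move=> H; elim/last_ind: l => [|l a IH] //.
by rewrite cfold_rcons /= H IH size_rcons addn1.
Qed.

Lemma pair_let A B C (p : A * B) (g : A -> B -> C) :
  (let: (x, y) := p in g x y) = g p.1 p.2.
Proof. by case: p. Qed.

Lemma cfold_indG A S (f : S -> A -> S * nat) l s0 (P : seq A -> S -> nat -> Prop) (G : Prop) :
  P [::] s0 0 ->
  (forall l1 a l2 s c, l = l1 ++ a :: l2 -> P l1 s c ->
      P (rcons l1 a) (f s a).1 (c + (f s a).2.+1)) ->
  (P l (cfold f l s0).1 (cfold f l s0).2 -> G) -> G.
Proof. by move=> H0 HS; apply; apply: cfold_ind. Qed.

Lemma uniq_size_le n (s : seq 'I_n) : uniq s -> size s <= n.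
Proof. by move/card_uniqP <-; rewrite -[n in _ <= n]card_ord max_card. Qed.

Lemma sum_updf_size n (T : Type) (P : 'I_n -> seq T) v x :
  \sum_(y : 'I_n) size (updf P v (x :: P v) y) = (\sum_(y : 'I_n) size (P y)).+1.
Proof.
rewrite (bigD1 v) //= [in RHS](bigD1 v) //= /updf eqxx addSn; congr (_.+1 + _).
by apply: eq_bigr => y /negbTE ->.
Qed.

Section Preds.
Variables (n : nat) (succ : 'I_n -> seq 'I_n).

Lemma preds_spec :
  (forall v u, count_mem u ((preds_comp succ).1 v) = count_mem v (succ u)) /\
  \sum_v size ((preds_comp succ).1 v) = nedges succ /\
  (preds_comp succ).2 = nedges succ + n.
Proof.
rewrite /preds_comp.
set F := (fun P u => _).
apply: (@cfold_indG _ _ F (enum 'I_n) (fun=> [::])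
  (fun l1 Pf c => (forall v u, count_mem u (Pf v) = (u \in l1) * count_mem v (succ u)) /\
     \sum_v size (Pf v) = \sum_(u <- l1) size (succ u) /\
     c = \sum_(u <- l1) (size (succ u)).+1)).
- split; first by move=> v u; rewrite /=.
  by rewrite !big_nil; split=> //; rewrite big1.
- move=> l1 a l2 Pf c E [H1 [H2 H3]].
  have Hna : a \notin l1.
    by have := enum_uniq 'I_n; rewrite E cat_uniq /= negb_or => /and3P [_ /andP [] ].
  rewrite /F; split; last split.
  + move=> v u.
    apply: (@cfold_indG _ _ (fun P0 v0 => (updf P0 v0 (a :: P0 v0), 0)) (succ a) Pf
      (fun l Pg _ => forall v u, count_mem u (Pg v) = count_mem u (Pf v) + (u == a) * count_mem v l)).
    * by move=> ? ?; rewrite muln0 addn0.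
    * move=> l3 b l4 Pg c' _ IH v' u'; rewrite /= /updf.
      rewrite -cats1 count_cat /=; case: (v' =P b) => [->|Hne].
      - rewrite /= IH eqxx eq_sym; case: (u' == a) => /=; lia.
      - rewrite IH; have -> : (b == v') = false by apply/eqP => E'; apply: Hne; rewrite E'.
        by rewrite /= !addn0.
    move=> IH; rewrite IH H1 mem_rcons in_cons.
    case: (u =P a) => [->|_]; first by rewrite (negbTE Hna) mul0n mul1n.
    by rewrite /= mul0n addn0.
  + apply: (@cfold_indG _ _ (fun P0 v0 => (updf P0 v0 (a :: P0 v0), 0)) (succ a) Pf
      (fun l Pg _ => \sum_v size (Pg v) = \sum_v size (Pf v) + size l)).
    * by rewrite addn0.
    * by move=> l3 b l4 Pg c' _ IH /=; rewrite sum_updf_size IH size_rcons addnS.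
    by move=> ->; rewrite H2 -cats1 big_cat big_seq1.
  + rewrite cfold_cost0 // H3 -cats1 big_cat big_seq1 /=; done.
move=> [H1 [H2 H3]]; split; last split.
- by move=> v u; rewrite H1 mem_enum mul1n.
- by rewrite H2 big_enum /nedges; apply: eq_bigl => ?; rewrite inE.
- rewrite H3 big_enum /nedges /=.
  have -> : \sum_(i in 'I_n) (size (succ i)).+1 = \sum_i (size (succ i) + 1).
    by apply: eq_big => // ?; rewrite addn1.
  by rewrite big_split /= sum1_card card_ord.
Qed.
End Preds.

Lemma foldl_count T (r : pred T) l c0 :
  foldl (fun c u => if r u then c.+1 else c) c0 l = c0 + count r l.
Proof. elim: l c0 => [|x l IH] c0 /=; first by rewrite addn0. by rewrite IH; case: (r x) => /=; lia. Qed.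

Lemma foldl_all T (r : pred T) l b0 :
  foldl (fun b u => b && r u) b0 l = b0 && all r l.
Proof. elim: l b0 => [|x l IH] b0 /=; first by rewrite andbT. by rewrite IH andbA. Qed.

Lemma foldl_has T (r : pred T) l b0 :
  foldl (fun b u => b || r u) b0 l = b0 || has r l.
Proof. elim: l b0 => [|x l IH] b0 /=; first by rewrite orbF. by rewrite IH orbA. Qed.

Lemma foldl_max T (g : T -> nat) (r : pred T) l c0 :
  foldl (fun c u => if r u then maxn c (g u) else c) c0 l = maxn c0 (\max_(u <- l | r u) g u).
Proof.
elim: l c0 => [|x l IH] c0 /=; first by rewrite big_nil maxn0.
rewrite IH big_cons; case: (r x) => //; by rewrite maxnA.
Qed.

Lemma foldl_max' T (g : T -> nat) l c0 :
  foldl (fun c u => maxn c (g u)) c0 l = maxn c0 (\max_(u <- l) g u).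
Proof.
elim: l c0 => [|x l IH] c0 /=; first by rewrite big_nil maxn0.
by rewrite IH big_cons maxnA.
Qed.

Lemma updf_eq (I : eqType) X (f : I -> X) i x : updf f i x i = x.
Proof. by rewrite /updf eqxx. Qed.
Lemma updf_ne (I : eqType) X (f : I -> X) i x j : j != i -> updf f i x j = f j.
Proof. by rewrite /updf => /negbTE ->. Qed.

Lemma cnt_pos (T : eqType) (x : T) s : (0 < count_mem x s) = (x \in s).
Proof. by rewrite -has_count has_pred1. Qed.

Lemma count_drop1 (T : eqType) (r h h' : pred T) (w : T) s :
  uniq s -> w \in s -> r w -> ~~ h w -> (forall x, h' x = h x || (x == w)) ->
  count (fun x => r x && ~~ h x) s = (count (fun x => r x && ~~ h' x) s).+1.
Proof.
move=> Hu Hw Hr Hh Hh'.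
have := count_predUI (fun x => r x && ~~ h' x) (pred1 w) s.
have -> : count (predI (fun x => r x && ~~ h' x) (pred1 w)) s = 0.
  apply/eqP; rewrite -leqn0 leqNgt -has_count; apply/hasPn => x _ /=.
  by rewrite Hh'; case: (x == w); rewrite /= ?andbF ?orbT ?andbF.
rewrite addn0 (count_uniq_mem _ Hu) Hw addn1 => <-.
apply: eq_count => x /=; rewrite Hh'; case: (x =P w) => [->|] /=.
- by rewrite Hr Hh /= ?eqxx ?orbT.
- by move=> _; rewrite !orbF.
Qed.

Section Main.
Variables (n k : nat) (own : 'I_n -> bool) (pr : 'I_n -> nat) (succ : 'I_n -> seq 'I_n)
  (tv tesc : 'I_k -> seq 'I_n) (tsig : 'I_k -> 'I_n -> 'I_n).

Hypothesis Hutv : forall i, uniq (tv i).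
Hypothesis Huesc : forall i, uniq (tesc i).
Hypothesis Husucc : forall v, uniq (succ v).
Hypothesis Hesc : forall i, [set x in tesc i] =
  tangle_esc own succ setT (tset tv i) (odd (prmax pr (tset tv i))).

Lemma prmax_tv j : prmax pr (tset tv j) = \max_(v <- tv j) pr v.
Proof. by rewrite (big_uniq _ (Hutv j)) /prmax; apply: eq_bigl => v; rewrite inE. Qed.

Section Region.
Variables (P : 'I_n -> seq 'I_n) (rem : 'I_n -> bool) (p : nat).

Lemma init_vertices_spec st c :
  init_vertices pr succ rem p (st0 n k) = (st, c) ->
  [/\ forall v, inZ st v = rem v && (pr v == p),
      forall v, rem v -> cnt st v = count rem (succ v),
      sgm st = (fun _ => None) /\ tc st = (fun _ => 0) /\ tact st = (fun _ => false) /\ tix st = (fun _ => [::]),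
      que st = reg st /\ uniq (que st) /\ (forall v, (v \in que st) = inZ st v)
    & c = \sum_v (if rem v then size (succ v) else 0) + n].
Proof.
rewrite /init_vertices; set f := (X in cfold X) => E.
apply: (@cfold_indG _ _ f (enum 'I_n) (st0 n k)
  (fun l1 st c => [/\ forall v, inZ st v = (v \in l1) && rem v && (pr v == p),
     forall v, v \in l1 -> rem v -> cnt st v = count rem (succ v),
     sgm st = (fun _ => None) /\ tc st = (fun _ => 0) /\ tact st = (fun _ => false) /\ tix st = (fun _ => [::]),
     que st = reg st /\ uniq (que st) /\ (forall v, (v \in que st) = inZ st v)
   & c = \sum_(v <- l1) ((if rem v then size (succ v) else 0) + 1)])).
- by split=> //; rewrite big_nil.
- move=> l1 a l2 s c0 El [H1 H3 H4 [H5 [H6 H7]] H8].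
  have Hna : a \notin l1.
    by have := enum_uniq 'I_n; rewrite El cat_uniq /= negb_or => /and3P [_ /andP [] ].
  have Hc : c0 + ((if rem a then size (succ a) else 0) + 1) =
            \sum_(v <- rcons l1 a) ((if rem v then size (succ v) else 0) + 1).
    by rewrite H8 -cats1 big_cat big_seq1.
  case Hr: (rem a); last first.
  + rewrite /f Hr /=; split=> //; last by rewrite -Hc Hr.
    * by move=> v; rewrite H1 mem_rcons in_cons; case: (v =P a) => [->|]; rewrite ?Hr ?andbF.
    * by move=> v; rewrite mem_rcons in_cons => /orP [/eqP ->|]; [rewrite Hr | exact: H3].
  + rewrite /f Hr; case Ecf: (cfold _ (succ a) 0) => [cn cc].
    have Ecn : cn = count rem (succ a) by have := congr1 fst Ecf; rewrite cfold_fst foldl_count.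
    have Ecc : cc = size (succ a) by have := congr1 snd Ecf; rewrite cfold_cost0.
    rewrite /=; case Hp: (pr a == p); rewrite /=; split => //; try by rewrite -Hc Hr Ecc addn1.
    * move=> v; rewrite /updf mem_rcons in_cons; case: (v =P a) => [->|_]; first by rewrite Hr Hp.
      by rewrite H1.
    * move=> v; rewrite mem_rcons in_cons /updf; case: (v =P a) => [->|_]//= Hv; exact: H3.
    * split; first by rewrite H5.
      split; first by rewrite /= H6 andbT H7 H1 (negbTE Hna).
      move=> v; rewrite in_cons H7 /updf; case: (v =P a) => //.
    * move=> v; rewrite H1 mem_rcons in_cons; case: (v =P a) => [->|]; rewrite ?Hp ?andbF //.
    * move=> v; rewrite mem_rcons in_cons /updf; case: (v =P a) => [->|_]//= Hv; exact: H3.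
- move=> [H1 H3 H4 H5 H6]; rewrite E /= in H1 H3 H4 H5 H6; split=> //.
  + by move=> v; rewrite H1 mem_enum.
  + by move=> v Hv; apply: H3; rewrite ?mem_enum.
  + rewrite H6 big_enum big_split /= sum1_card card_ord; congr (_ + _).
Qed.

Definition U := [set v | rem v].
Definition elig (j : 'I_k) := (tset tv j \subset U) && (odd (prmax pr (tset tv j)) == odd p).

Lemma init_tangles_spec st c st' :
  init_tangles pr tv tesc rem p st = (st', c) ->
  tc st = (fun _ => 0) -> tact st = (fun _ => false) -> tix st = (fun _ => [::]) ->
  [/\ inZ st' = inZ st /\ sgm st' = sgm st /\ cnt st' = cnt st /\ que st' = que st /\ reg st' = reg st,
      forall j w, count_mem j (tix st' w) = [&& elig j, rem w & w \in tesc j],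
      forall j, elig j -> tc st' j = count rem (tesc j),
      forall j, tact st' j = elig j && (count rem (tesc j) != 0)
    & \sum_w size (tix st' w) <= \sum_j size (tesc j) /\
      c <= \sum_j (2 * size (tv j) + size (tesc j)).+1].
Proof.
rewrite /init_tangles; set f := (X in cfold X) => E Htc Hta Htx.
apply: (@cfold_indG _ _ f (enum 'I_k) st
  (fun l1 s c => [/\ inZ s = inZ st /\ sgm s = sgm st /\ cnt s = cnt st /\ que s = que st /\ reg s = reg st,
      forall j w, count_mem j (tix s w) = [&& j \in l1, elig j, rem w & w \in tesc j],
      forall j, j \in l1 -> elig j -> tc s j = count rem (tesc j),
      forall j, tact s j = [&& j \in l1, elig j & count rem (tesc j) != 0]
    & \sum_w size (tix s w) <= \sum_(j <- l1) size (tesc j) /\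
      c <= \sum_(j <- l1) (2 * size (tv j) + size (tesc j)).+1])).
- split=> //; first by move=> j w; rewrite Htx.
  + by move=> j; rewrite Hta.
  + by rewrite !big_nil Htx big1.
- move=> l1 a l2 s c0 El [Hf H1 H2 H3 [H4 H5]].
  have Hna : a \notin l1.
    by have := enum_uniq 'I_k; rewrite El cat_uniq /= negb_or => /and3P [_ /andP [] ].
  have Hs1 : forall (F : 'I_k -> nat), \sum_(j <- rcons l1 a) F j = \sum_(j <- l1) F j + F a.
    by move=> F; rewrite -cats1 big_cat big_seq1.
  rewrite /f.
  case E1: (cfold _ (tv a) true) => [inG c1].
  have Ei : inG = all rem (tv a) by have := congr1 fst E1; rewrite cfold_fst foldl_all.
  have Ec1 : c1 = size (tv a) by have := congr1 snd E1; rewrite cfold_cost0.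
  case E2: (cfold _ (tv a) 0) => [tp c2].
  have Et : tp = prmax pr (tset tv a) by have := congr1 fst E2; rewrite cfold_fst foldl_max' max0n prmax_tv.
  have Ec2 : c2 = size (tv a) by have := congr1 snd E2; rewrite cfold_cost0.
  have Helig : elig a = inG && (odd tp == odd p).
    rewrite /elig Ei Et; congr (_ && _); apply/subsetP/allP => H v Hv.
    + by have := H v; rewrite !inE => /(_ Hv).
    + by rewrite inE; apply: H; rewrite inE in Hv.
  case: ifP => He; last first.
  + rewrite /= -Helig in He; split=> //.
    * move=> j w; rewrite H1 mem_rcons in_cons; case: (j =P a) => [->|] //=; by rewrite He (negbTE Hna).
    * move=> j; rewrite mem_rcons in_cons => /orP [/eqP ->|]; [by rewrite He | exact: H2].
    * move=> j; rewrite H3 mem_rcons in_cons; case: (j =P a) => [->|] //=; by rewrite He (negbTE Hna).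
    * split; first by rewrite Hs1 (leq_trans H4) ?leq_addr.
      rewrite Hs1 Ec1 Ec2 (leq_trans (leq_add H5 (leqnn _))) // leq_add2l /=; lia.
  + rewrite -Helig in He.
    set g := (fun ct v => _).
    apply: (@cfold_indG _ _ g (tesc a) (0, tix s)
       (fun l3 ct c3 => [/\ ct.1 = count rem l3,
           forall j w, count_mem j (ct.2 w) = count_mem j (tix s w) + [&& j == a, rem w & w \in l3],
           \sum_w size (ct.2 w) = \sum_w size (tix s w) + count rem l3 & c3 = size l3])).
    * split=> //= [j w|]; by rewrite ?in_nil ?andbF ?addn0.
    * move=> l3 b l4 [x y] c3 El3 [Hx Hy Hsz Hc3]; rewrite /= in Hx Hy Hsz; rewrite /g /=.
      have Hnb : b \notin l3.
        by have := Huesc a; rewrite El3 cat_uniq /= negb_or => /and3P [_ /andP [] ].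
      case Hb: (rem b) => /=; split.
      - by rewrite Hx -cats1 count_cat /= Hb addn0 addn1.
      - move=> j w; rewrite /updf; case: (w =P b) => [->|Hwb].
        + rewrite /= Hy Hb mem_rcons in_cons eqxx /= (negbTE Hnb) andbF addn0.
          by rewrite eq_sym; case: (j == a) => /=; lia.
        + rewrite Hy mem_rcons in_cons; have -> : (w == b) = false by apply/eqP.
          done.
      - by rewrite sum_updf_size /= Hsz -cats1 count_cat /= Hb addn0 addn1 addnS.
      - by rewrite Hc3 size_rcons addn1.
      - by rewrite Hx -cats1 count_cat /= Hb !addn0.
      - move=> j w; rewrite Hy mem_rcons in_cons.
        case: (w =P b) => [->|] /=; first by rewrite Hb !andbF.
        done.
      - by rewrite Hsz -cats1 count_cat /= Hb !addn0.
      - by rewrite Hc3 size_rcons addn1.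
    case Eg: (cfold g (tesc a) (0, tix s)) => [[cn tx] c3] /= [Hx Hy Hsz Hc3].
    rewrite /= in Hx Hy Hsz.
    split=> //.
    * move=> j w; rewrite /= Hy H1 mem_rcons in_cons.
      case: (j =P a) => [->|] /=; last by rewrite addn0.
      by rewrite (negbTE Hna) He add0n.
    * move=> j; rewrite mem_rcons in_cons /updf /= => /orP [/eqP ->|Hj]; first by rewrite eqxx Hx.
      case: (j =P a) => [E'|_]; last exact: H2.
      by move: Hj; rewrite E' (negbTE Hna).
    * move=> j; rewrite /updf /= H3 mem_rcons in_cons.
      case: (j =P a) => [->|] /=; first by rewrite He Hx.
      done.
    * split; first by rewrite Hsz Hs1 leq_add // count_size.
      rewrite Hs1 Ec1 Ec2 Hc3 (leq_trans (leq_add H5 (leqnn _))) // leq_add2l /=; lia.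
- rewrite E /= => [[Hf H1 H2 H3 [H4 H5]]]; split=> //.
  + by move=> j w; rewrite H1 mem_enum.
  + by move=> j; apply: H2; rewrite mem_enum.
  + by move=> j; rewrite H3 mem_enum.
  + by split; [rewrite (leq_trans H4) // big_enum | rewrite (leq_trans H5) // big_enum].
Qed.

Hypothesis HP : forall v u, count_mem u (P v) = count_mem v (succ u).

Definition A := [set v | rem v && (pr v == p)].
Definition Zs (st : rstate n k) := [set v | inZ st v].
Definition abs (st : rstate n k) : astate n := (Zs st, sgm st).
Local Notation step := (attr_step own pr succ tv tsig U A (odd p)).
Local Notation reach := (attr_reach own pr succ tv tsig U A (odd p)).
Definition hd (st : rstate n k) v := inZ st v && (v \notin que st).

Lemma reach_snoc x y z : reach x y -> step y z -> reach x z.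
Proof.
elim=> [st|s1 s2 s3 H _ IH] Hs; first by apply: AttrTrans Hs _; apply: AttrRefl.
by apply: AttrTrans H (IH Hs).
Qed.

Definition StructInv (st : rstate n k) :=
  [/\ forall v, inZ st v -> rem v, uniq (reg st), forall v, (v \in reg st) = inZ st v,
      uniq (que st) & forall v, v \in que st -> inZ st v].

Definition Psi (R : pred 'I_n) (wt : 'I_n -> nat) (st : rstate n k) :=
  \sum_(v | R v && ~~ inZ st v) wt v + \sum_(v <- que st) wt v.

Lemma push_struct st u : StructInv st -> rem u -> ~~ inZ st u -> StructInv (push st u).
Proof.
move=> [H1 H2 H3 H4 H5] Hr Hn; split=> /=.
- by move=> v; rewrite /updf; case: (v =P u) => [->|_]; [| apply: H1].
- by rewrite H2 H3 Hn.
- by move=> v; rewrite in_cons H3 /updf; case: (v =P u).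
- by rewrite H4 andbT; apply/negP => /H5; apply/negP.
- by move=> v; rewrite in_cons /updf; case: (v =P u) => //= _; apply: H5.
Qed.

Lemma push_Psi (R : pred 'I_n) (wt : 'I_n -> nat) st u : R u -> ~~ inZ st u -> Psi R wt (push st u) = Psi R wt st.
Proof.
move=> Hr Hn; rewrite /Psi /= big_cons [in RHS](bigD1 u) /=; last by rewrite Hr Hn.
have -> : \sum_(v | R v && ~~ updf (inZ st) u true v) wt v =
          \sum_(v | (R v && ~~ inZ st v) && (v != u)) wt v.
  by apply: eq_bigl => v; rewrite /updf; case: (v =P u) => [->|]; rewrite ?andbF ?andbT.
by rewrite addnCA addnA.
Qed.

Lemma push_hd st u : ~~ inZ st u -> hd (push st u) =1 hd st.
Proof.
move=> Hn v; rewrite /hd /= /updf in_cons; case: (v =P u) => [->|] /=; first by rewrite (negbTE Hn).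
done.
Qed.

Lemma Zs_push st u : Zs (push st u) = u |: Zs st.
Proof. by apply/setP => v; rewrite !inE /= /updf; case: (v =P u). Qed.

Lemma esc_elig j v : elig j ->
  (v \in tangle_esc own succ U (tset tv j) (odd p)) = rem v && (v \in tesc j).
Proof.
rewrite /elig => /andP [_ /eqP Ho].
have := Hesc j; rewrite Ho => /setP /(_ v).
by rewrite /tangle_esc !inE => ->.
Qed.

Definition VInv (st : rstate n k) (H : pred 'I_n) u :=
  if own u == odd p then (forall x, x \in succ u -> ~~ H x)
  else (cnt st u = count (fun x => rem x && ~~ H x) (succ u) /\ 0 < cnt st u).
Definition J8 (st : rstate n k) (H : pred 'I_n) u :=
  inZ st u -> own u = odd p -> sgm st u = None -> u \in A /\ (forall x, x \in succ u -> ~~ H x).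
Definition PV (st : rstate n k) H u := (rem u -> ~~ inZ st u -> VInv st H u) /\ J8 st H u.
Definition Fired (st : rstate n k) j :=
  forall v, v \in tv j -> inZ st v /\ (own v = odd p -> sgm st v != None).
Definition TInv (st : rstate n k) (Hf : 'I_k -> pred 'I_n) :=
  [/\ forall j, elig j -> tc st j = count (fun x => rem x && ~~ Hf j x) (tesc j),
      forall j, tact st j -> [/\ elig j, has rem (tesc j) & 0 < tc st j]
    & forall j, elig j -> has rem (tesc j) -> ~~ tact st j -> Fired st j].
Definition TixInv (st : rstate n k) :=
  forall j w, count_mem j (tix st w) = [&& elig j, rem w & w \in tesc j].
Definition AInv (st : rstate n k) := forall v, v \in A -> inZ st v.
Definition none : 'I_n -> option 'I_n := fun _ => None.

Definition Frame (st st' : rstate n k) :=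
  [/\ forall v, inZ st v -> inZ st' v,
      forall v, sgm st v != None -> sgm st' v != None,
      tc st' = tc st, tact st' = tact st & tix st' = tix st].

Lemma Frame_refl st : Frame st st.
Proof. by split. Qed.
Lemma Frame_trans s1 s2 s3 : Frame s1 s2 -> Frame s2 s3 -> Frame s1 s3.
Proof.
move=> [H1 H2 H3 H4 H5] [G1 G2 G3 G4 G5]; split; try congruence; auto.
Qed.

Lemma PV_frame st st' H u :
  inZ st' u = inZ st u -> sgm st' u = sgm st u -> cnt st' u = cnt st u -> PV st H u -> PV st' H u.
Proof. by move=> E1 E2 E3; rewrite /PV /VInv /J8 E1 E2 E3. Qed.

Lemma AInv_frame st st' : Frame st st' -> AInv st -> AInv st'.
Proof. by move=> [H1 _ _ _ _] HA v /HA /H1. Qed.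

Lemma TixInv_frame st st' : Frame st st' -> TixInv st -> TixInv st'.
Proof. by move=> [_ _ _ _ E] H j w; rewrite E. Qed.

Lemma Fired_frame st st' j : Frame st st' -> Fired st j -> Fired st' j.
Proof. move=> [H1 H2 _ _ _] HF v /HF [Hz Hs]; split; auto. Qed.

Lemma TInv_frame st st' Hf : Frame st st' -> TInv st Hf -> TInv st' Hf.
Proof.
move=> Hfr; have [_ _ E3 E4 _] := Hfr; move=> [T1 T2 T3]; split; rewrite ?E3 ?E4 //.
by move=> j Hj Hh Ht; apply: Fired_frame Hfr _; apply: T3.
Qed.

Lemma hpred_ok w u st Hold H :
  (forall x, H x = Hold x || (x == w)) -> rem w -> ~~ Hold w -> inZ st w ->
  u \in P w ->
  reach (A, none) (abs st) -> StructInv st -> PV st Hold u -> hd st =1 H ->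
  let st' := hpred own rem p w u st in
  [/\ reach (A, none) (abs st'), StructInv st', PV st' H u, hd st' =1 H &
     (forall v, v != u -> [/\ inZ st' v = inZ st v, sgm st' v = sgm st v & cnt st' v = cnt st v])]
  /\ Frame st st' /\
  (forall (R : pred 'I_n) wt, (rem u -> R u) -> Psi R wt st' = Psi R wt st).
Proof.
move=> HH Hrw HHw Hzw Hu Hr Hs [HV HJ] Hhd /=.
have Hwu : w \in succ u by rewrite -cnt_pos -HP cnt_pos.
have HHo : forall x, x \in succ u -> x != w -> H x = Hold x.
  by move=> x _ /negbTE Hx; rewrite HH Hx orbF.
have Hsu := Husucc u.
rewrite /hpred.
case Hru: (rem u); last first.
  split; [split=> //|split; [exact: Frame_refl|by []]].
  split; first by move=> Hr'; rewrite Hr' in Hru.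
  move=> Hz; have [Hs1 _ _ _ _] := Hs; by move: Hz => /Hs1; rewrite Hru.
case Hzu: (inZ st u) => /=.
-
  case Ho: (own u == odd p) => /=; case Hsg: (sgm st u == None) => /=.
  +
    have [HA _] := HJ Hzu (eqP Ho) (eqP Hsg).
    split; last split.
    * split.
      -- apply: reach_snoc Hr _; rewrite /abs /=.
         apply: AttrA => //; [exact: eqP Ho | exact: eqP Hsg | by rewrite inE].
      -- exact: Hs.
      -- split; first by rewrite Hzu.
         by rewrite /J8 /= !updf_eq.
      -- exact: Hhd.
      -- by move=> v Hv; rewrite /= updf_ne.
    * split=> //= v; rewrite /updf; case: (v == u) => //.
    * by [].
  + split; last split; [|exact: Frame_refl|by []].
    split=> //; split; first by rewrite Hzu.
    by move=> _ _ E; rewrite E in Hsg.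
  + split; last split; [|exact: Frame_refl|by []].
    split=> //; split; first by rewrite Hzu.
    by move=> _ E; rewrite E eqxx in Ho.
  + split; last split; [|exact: Frame_refl|by []].
    split=> //; split; first by rewrite Hzu.
    by move=> _ E; rewrite E eqxx in Ho.
-
  have HVu := HV Hru (negbT Hzu).
  rewrite /VInv in HVu.
  case Ho: (own u == odd p) => /=.
  +
    have Hn : ~~ inZ (set_sgm st u (Some w)) u by rewrite /= Hzu.
    split; last split.
    * split.
      -- apply: reach_snoc Hr _; rewrite /abs Zs_push /=.
         apply: AttrAlpha => //; [by rewrite inE|by rewrite inE Hzu|exact: eqP Ho|by rewrite inE].
      -- by apply: push_struct => //; case: Hs.
      -- split; first by rewrite /= updf_eq.
         by rewrite /J8 /= !updf_eq.
      -- by move=> v; rewrite (push_hd Hn); apply: Hhd.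
      -- by move=> v Hv; rewrite /= !updf_ne.
    * split=> //= v; rewrite /updf; case: (v == u) => //.
    * by move=> R wt HR; rewrite push_Psi //; apply: HR.
  +
    move: HVu; rewrite Ho => [[Hc Hc0]].
    have Hc' : (cnt st u).-1 = count (fun x => rem x && ~~ H x) (succ u).
      by rewrite Hc (count_drop1 Hsu Hwu Hrw HHw HH).
    case Hz: ((cnt st u).-1 == 0).
    *
      have Hn : ~~ inZ (set_cnt st u 0) u by rewrite /= Hzu.
      split; last split.
      -- split.
         ++ apply: reach_snoc Hr _; rewrite /abs Zs_push /=.
            apply: AttrOpp => //; [by rewrite inE|by rewrite inE Hzu|by move: Ho; case: (own u); case: (odd p)|].
            move=> x; rewrite inE => Hrx Hx.
            have : ~~ has (fun x => rem x && ~~ H x) (succ u) by rewrite has_count -Hc' (eqP Hz).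
            move/hasPn/(_ x Hx); rewrite Hrx /= negbK -Hhd /hd inE => /andP [] //.
         ++ by apply: push_struct => //; case: Hs.
         ++ split; first by rewrite /= updf_eq.
            by rewrite /J8 /= => _ E; rewrite E eqxx in Ho.
         ++ by move=> v; rewrite (push_hd Hn); apply: Hhd.
         ++ by move=> v Hv; rewrite /= !updf_ne.
      -- split=> //= v; rewrite /updf; case: (v == u) => //.
      -- by move=> R wt HR; rewrite push_Psi //; apply: HR.
    * split; last split.
      -- split=> //.
         ++ split; last by rewrite /J8 /= => _ E; rewrite E eqxx in Ho.
            move=> _ _; rewrite /VInv Ho /= updf_eq -Hc'; split=> //; by rewrite lt0n Hz.
         ++ by move=> v Hv; rewrite /= updf_ne.
      -- by split.
      -- by [].
Qed.

Lemma PV_irrel st H1 H2 u :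
  (forall x, x \in succ u -> H1 x = H2 x) -> PV st H1 u -> PV st H2 u.
Proof.
move=> E [HV HJ]; split.
- move=> Hr Hz; move: (HV Hr Hz); rewrite /VInv; case: (own u == odd p).
  + by move=> H x Hx; rewrite -E //; apply: H.
  + have E' : count (fun x => rem x && ~~ H1 x) (succ u) = count (fun x => rem x && ~~ H2 x) (succ u).
      by apply: eq_in_count => x Hx /=; rewrite E.
    by rewrite E'.
- move=> Hz Ho Hs; have [HA HH] := HJ Hz Ho Hs; split=> // x Hx; rewrite -E //; exact: HH.
Qed.

Lemma uniq_P w : uniq (P w).
Proof.
apply: count_mem_uniq => x.
have E1 : count_mem x (P w) = count_mem w (succ x) := HP w x.
by rewrite -cnt_pos E1 (count_uniq_mem _ (Husucc x)) lt0b.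
Qed.

Lemma predloop_ok w st Hold H :
  (forall x, H x = Hold x || (x == w)) -> rem w -> ~~ Hold w -> inZ st w ->
  reach (A, none) (abs st) -> StructInv st -> (forall u, PV st Hold u) -> hd st =1 H ->
  let r := cfold (fun s u => (hpred own rem p w u s, 0)) (P w) st in
  [/\ reach (A, none) (abs r.1), StructInv r.1, (forall u, PV r.1 H u), hd r.1 =1 H &
     [/\ Frame st r.1,
        (forall (R : pred 'I_n) wt, (forall x, rem x -> R x) -> Psi R wt r.1 = Psi R wt st)
      & r.2 = size (P w)]].
Proof.
move=> HH Hrw HHw Hzw Hr Hs HPV Hhd /=.
apply: (@cfold_indG _ _ (fun s u => (hpred own rem p w u s, 0)) (P w) st
  (fun l1 s c => [/\ reach (A, none) (abs s), StructInv s,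
       (forall u, PV s (if u \in l1 then H else Hold) u), hd s =1 H &
     [/\ Frame st s,
        (forall (R : pred 'I_n) wt, (forall x, rem x -> R x) -> Psi R wt s = Psi R wt st)
      & c = size l1]])).
- split=> //; split=> //; exact: Frame_refl.
- move=> l1 a l2 s c El [R1 R2 R3 R4 [R5 R6 R7]].
  have Hna : a \notin l1.
    by have := uniq_P w; rewrite El cat_uniq /= negb_or => /and3P [_ /andP [] ].
  have Ha : a \in P w by rewrite El mem_cat in_cons eqxx orbT.
  have Hzw' : inZ s w by have [F1 _ _ _ _] := R5; apply: F1.
  have := R3 a; rewrite (negbTE Hna) => HPa.
  have [[S1 S2 S3 S4 S5] [S6 S7]] := hpred_ok HH Hrw HHw Hzw' Ha R1 R2 HPa R4.
  split=> //=.
  + move=> u; rewrite mem_rcons in_cons; case: (u =P a) => [->|/eqP Hua] //=.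
    have [E1 E2 E3] := S5 u Hua; apply: PV_frame E1 E2 E3 _; exact: R3.
  + split; first exact: Frame_trans R5 S6.
    * by move=> R wt HR; rewrite S7 ?R6 //; apply: HR.
    * by rewrite R7 size_rcons addn1.
- move=> [R1 R2 R3 R4 [R5 R6 R7]]; split=> //.
  move=> u; have := R3 u; case: ifP => // Hu; apply: PV_irrel => x Hx.
  rewrite HH; case: (x =P w) => [E|]; last by rewrite orbF.
  have : u \in P w by rewrite -cnt_pos HP cnt_pos -E.
  by rewrite Hu.
Qed.

Definition TP (st : rstate n k) := \sum_(j | tact st j) size (tv j).

Lemma hvert_loop j st : elig j -> StructInv st ->
  let r := cfold (fun s v => (hvert own tsig p j v s, 0)) (tv j) st in
  [/\ forall v, inZ r.1 v = inZ st v || (v \in tv j),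
      forall v, sgm r.1 v = if [&& v \in tv j, own v == odd p & sgm st v == None]
                            then Some (tsig j v) else sgm st v,
      StructInv r.1,
      cnt r.1 = cnt st /\ tc r.1 = tc st /\ tact r.1 = tact st /\ tix r.1 = tix st &
      [/\ hd r.1 =1 hd st,
          forall (R : pred 'I_n) wt, (forall x, rem x -> R x) -> Psi R wt r.1 = Psi R wt st
        & r.2 = size (tv j)]].
Proof.
move=> He Hs /=.
have Hsub : forall v, v \in tv j -> rem v.
  by move: He => /andP [/subsetP H _] v Hv; have := H v; rewrite !inE => /(_ Hv).
apply: (@cfold_indG _ _ (fun s v => (hvert own tsig p j v s, 0)) (tv j) st
  (fun l1 s c => [/\ forall v, inZ s v = inZ st v || (v \in l1),
      forall v, sgm s v = if [&& v \in l1, own v == odd p & sgm st v == None]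
                            then Some (tsig j v) else sgm st v,
      StructInv s,
      cnt s = cnt st /\ tc s = tc st /\ tact s = tact st /\ tix s = tix st &
      [/\ hd s =1 hd st,
          forall (R : pred 'I_n) wt, (forall x, rem x -> R x) -> Psi R wt s = Psi R wt st
        & c = size l1]])).
- by split=> // v; rewrite orbF.
- move=> l1 a l2 s c El [R1 R2 R3 [R4 [R5 [R6 R7]]] [R8 R9 R10]].
  have Hna : a \notin l1.
    by have := Hutv j; rewrite El cat_uniq /= negb_or => /and3P [_ /andP [] ].
  have Hra : rem a by apply: Hsub; rewrite El mem_cat in_cons eqxx orbT.
  rewrite /hvert /=.
  set s0 := (if (own a == odd p) && _ then _ else _).
  have Hs0z : inZ s0 = inZ s by rewrite /s0; case: ifP => _ //=.
  have Hs0q : que s0 = que s by rewrite /s0; case: ifP => _ //=.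
  have Hs0r : reg s0 = reg s by rewrite /s0; case: ifP => _ //=.
  have Hs0o : [/\ cnt s0 = cnt s, tc s0 = tc s, tact s0 = tact s & tix s0 = tix s].
    by rewrite /s0; case: ifP => _ //=.
  have Hsa : sgm s a = sgm st a by rewrite R2 (negbTE Hna).
  have Hs0s : forall v, sgm s0 v = if [&& v == a, own v == odd p & sgm st v == None]
                            then Some (tsig j v) else sgm s v.
    move=> v; rewrite /s0; case: ifP => /= [/andP [Ho Hn]|Hf].
    + rewrite /updf; case: (v =P a) => [->|] //=.
      by rewrite Ho -Hsa Hn.
    + case: (v =P a) => [E|] //=; rewrite E; case: ifP => // /andP [Ho Hn].
      by rewrite Hsa Ho Hn in Hf.
  have HSs0 : StructInv s0 by move: R3; rewrite /StructInv Hs0z Hs0q Hs0r.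
  have Hhd0 : hd s0 =1 hd s by move=> v; rewrite /hd Hs0z Hs0q.
  have HPsi0 : forall (R : pred 'I_n) wt, Psi R wt s0 = Psi R wt s.
    by move=> R wt; rewrite /Psi Hs0z Hs0q.
  case: Hs0o => O1 O2 O3 O4.
  case: ifP => Hz.
  + split=> /=.
    * move=> v; rewrite /updf Hs0z mem_rcons in_cons; case: (v =P a) => [->|] /=; first by rewrite orbT.
      by rewrite R1.
    * move=> v; rewrite Hs0s mem_rcons in_cons R2; case: (v =P a) => //= ->.
      rewrite (negbTE Hna) /=; reflexivity.
    * apply: push_struct => //.
    * by rewrite O1 O2 O3 O4.
    * split.
      -- by move=> v; rewrite (push_hd Hz) Hhd0 R8.
      -- by move=> R wt HR; rewrite push_Psi ?HPsi0 ?R9 //; apply: HR.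
      -- by rewrite R10 size_rcons addn1.
  + split=> /=.
    * move=> v; rewrite Hs0z mem_rcons in_cons R1; case: (v =P a) => //= ->.
      by move/negbFE: Hz; rewrite Hs0z R1 orbT => ->.
    * move=> v; rewrite Hs0s mem_rcons in_cons R2; case: (v =P a) => //= ->.
      rewrite (negbTE Hna) /=; reflexivity.
    * exact: HSs0.
    * by rewrite O1 O2 O3 O4.
    * split.
      -- by move=> v; rewrite Hhd0 R8.
      -- by move=> R wt HR; rewrite HPsi0 R9.
      -- by rewrite R10 size_rcons addn1.
- by [].
Qed.

Lemma Fired_mono st st' j :
  (forall v, inZ st v -> inZ st' v) -> (forall v, sgm st v != None -> sgm st' v != None) ->
  Fired st j -> Fired st' j.
Proof. move=> H1 H2 HF v /HF [Hz Hs]; split; auto. Qed.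

Definition Frame2 (st st' : rstate n k) :=
  [/\ forall v, inZ st v -> inZ st' v,
      forall v, sgm st v != None -> sgm st' v != None &
      tix st' = tix st].

Lemma htan_ok st j w Hf H Hold :
  (forall x, H x = Hold x || (x == w)) -> rem w -> ~~ Hold w -> elig j -> w \in tesc j ->
  (forall x, Hf j x = Hold x) ->
  reach (A, none) (abs st) -> StructInv st -> (forall u, PV st H u) -> hd st =1 H ->
  TInv st Hf ->
  let r := htan own tv tsig p st j in
  [/\ reach (A, none) (abs r.1), StructInv r.1, (forall u, PV r.1 H u), hd r.1 =1 H &
   [/\ forall Hf', (forall x, Hf' j x = H x) -> (forall i, i != j -> forall x, Hf' i x = Hf i x) ->
         TInv r.1 Hf',
       Frame2 st r.1,
       forall (R : pred 'I_n) wt, (forall x, rem x -> R x) -> Psi R wt r.1 = Psi R wt st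
     & r.2 + TP r.1 = TP st]].
Proof.
move=> HH Hrw HHw He Hwj HfJ Hr Hs HPV Hhd [T1 T2 T3] /=.
have Htc : (tc st j).-1 = count (fun x => rem x && ~~ H x) (tesc j).
  rewrite T1 // (eq_count (a2 := fun x => rem x && ~~ Hold x)); last by move=> x /=; rewrite HfJ.
  by rewrite (count_drop1 (Huesc j) Hwj Hrw HHw HH).
rewrite /htan /=.
have Hcnt1 : forall Hf' i, elig i -> (forall x, Hf' j x = H x) ->
    (forall i, i != j -> forall x, Hf' i x = Hf i x) ->
    updf (tc st) j (tc st j).-1 i = count (fun x => rem x && ~~ Hf' i x) (tesc i).
  move=> Hf' i Hi E1 E2; rewrite /updf; case: (i =P j) => [->|/eqP Hij].
  + by rewrite Htc; apply: eq_count => x /=; rewrite E1.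
  + by rewrite T1 //; apply: eq_count => x /=; rewrite E2.
case: ifP => Hfire.
-
  move/andP: Hfire => [Hc0 Hta].
  set s1 := set_tact (set_tc st j (tc st j).-1) j false.
  have Hs1 : StructInv s1 by exact: Hs.
  have [V1 V2 V3 [V4 [V5 [V6 V7]]] [V8 V9 V10]] := hvert_loop He Hs1.
  set R1 := (cfold _ (tv j) s1) in V1 V2 V3 V4 V5 V6 V7 V8 V9 V10 *.
  have [_ Hhas _] := T2 j Hta.
  split.
  + apply: reach_snoc Hr _.
    have -> : abs R1.1 = (tset tv j :|: Zs st, fun v => if [&& v \in tset tv j, own v == odd p & sgm st v == None] then Some (tsig j v) else sgm st v).
      rewrite /abs; congr pair; first by apply/setP => v; rewrite !inE V1 orbC.
      by apply: functional_extensionality => v; rewrite V2 inE.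
    apply: AttrTangle.
    * by case/andP: He.
    * by case/andP: He => _ /eqP.
    * apply/set0Pn; have /hasP [x Hx Hrx] := Hhas; exists x; by rewrite esc_elig // Hrx Hx.
    * apply/subsetP => x; rewrite esc_elig // => /andP [Hrx Hx]; rewrite inE.
      have : ~~ has (fun x => rem x && ~~ H x) (tesc j) by rewrite has_count -Htc (eqP Hc0).
      by move/hasPn/(_ x Hx); rewrite Hrx /= negbK -Hhd => /andP [].
  + exact: V3.
  + move=> u; case Hu: (u \in tv j).
    * split; first by move=> _; rewrite V1 Hu orbT.
      rewrite /J8 V2 Hu /= => _ Ho; rewrite Ho eqxx /=.
      case: eqP => [_|Hn] //= E; by rewrite E in Hn.
    * apply: (@PV_frame st); [by rewrite V1 Hu orbF | by rewrite V2 Hu | by rewrite V4 | exact: HPV].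
  + by move=> v; rewrite V8; apply: Hhd.
  + split.
    * move=> Hf' E1 E2; split.
      -- by move=> i Hi; rewrite V5 /= (Hcnt1 Hf').
      -- move=> i; rewrite V6 /= /updf; case: (i =P j) => // /eqP Hij Ht.
         have [A1 A2 A3] := T2 i Ht; split=> //; by rewrite V5 /= updf_ne.
      -- move=> i Hi Hh; rewrite V6 /= /updf; case: (i =P j) => [->|/eqP Hij] Hn.
         ++ move=> v Hv; rewrite V1 V2 Hv orbT /=; split=> // Ho; rewrite Ho eqxx /=.
            by case: (sgm st v =P None) => // ?; apply/eqP.
         ++ apply: Fired_mono (T3 i Hi Hh Hn).
            ** by move=> v Hv; rewrite V1 Hv.
            ** by move=> v Hv; rewrite V2; case: ifP.
    * split.
      -- by move=> v Hv; rewrite V1 Hv.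
      -- by move=> v Hv; rewrite V2; case: ifP.
      -- exact: V7.
    * by move=> R wt HR; rewrite V9.
    * rewrite V10 /TP V6 /=.
      have -> : \sum_(i | updf (tact st) j false i) size (tv i) = \sum_(i | tact st i && (i != j)) size (tv i).
        by apply: eq_bigl => i; rewrite /updf; case: (i =P j) => [->|]; rewrite ?andbF ?andbT.
      by rewrite [in RHS](bigD1 j Hta).
-
  split=> //.
  split=> //.
  + move=> Hf' E1 E2; split.
    * by move=> i Hi; rewrite /= (Hcnt1 Hf').
    * move=> i; rewrite /= /updf; case: (i =P j) => [->|/eqP Hij] Ht.
      -- have [A1 A2 A3] := T2 j Ht; split=> //; rewrite lt0n; apply/negP => Hc.
         by rewrite Hc Ht in Hfire.
      -- have [A1 A2 A3] := T2 i Ht; split=> //.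
    * move=> i Hi Hh Ht; exact: T3 i Hi Hh Ht.
Qed.

Lemma TInv_irrel st Hf1 Hf2 :
  (forall j, elig j -> forall x, x \in tesc j -> Hf1 j x = Hf2 j x) -> TInv st Hf1 -> TInv st Hf2.
Proof.
move=> E [T1 T2 T3]; split=> // j Hj; rewrite T1 //.
by apply: eq_in_count => x Hx /=; rewrite E.
Qed.

Definition Inv (st : rstate n k) :=
  [/\ reach (A, none) (abs st), StructInv st, AInv st /\ TixInv st,
      forall u, PV st (hd st) u & TInv st (fun _ => hd st)].

Definition Phi (T0 : 'I_n -> seq 'I_k) (st : rstate n k) :=
  Psi rem (fun v => (size (P v) + size (T0 v)).+1) st + TP st.
Definition mu (st : rstate n k) := Psi predT (fun _ => 1) st.

Lemma Psi_pop (R : pred 'I_n) wt st w q :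
  que st = w :: q -> Psi R wt st = wt w + Psi R wt (set_que st q).
Proof. by move=> E; rewrite /Psi /= E big_cons; lia. Qed.

Lemma handle_ok st w q :
  que st = w :: q -> Inv st ->
  let r := handle own tv tsig P rem p w (set_que st q) in
  [/\ Inv r.1, tix r.1 = tix st, r.2.+1 + Phi (tix st) r.1 = Phi (tix st) st
     & mu r.1 < mu st].
Proof.
move=> Eq [Hr Hs [HA HT] HPV HTI] /=.
have [S1 S2 S3 S4 S5] := Hs.
have Hzw : inZ st w by apply: S5; rewrite Eq mem_head.
have Hrw : rem w by apply: S1.
have Hwq : w \notin q by move: S4; rewrite Eq /= => /andP [].
set st' := set_que st q.
have HH : forall x, hd st' x = hd st x || (x == w).
  move=> x; rewrite /hd /= Eq in_cons; case: (x =P w) => [->|] /=; first by rewrite Hzw Hwq orbT.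
  by rewrite !orbF.
have HHw : ~~ hd st w by rewrite /hd Eq mem_head andbF.
have Hs' : StructInv st'.
  split=> //; first by move: S4; rewrite Eq => /andP [].
  by move=> v Hv; apply: S5; rewrite Eq in_cons Hv orbT.
have [P1 P2 P3 P4 [P5 P6 P7]] := predloop_ok (st := st') HH Hrw HHw Hzw Hr Hs' HPV (fun x => erefl).
rewrite /handle.
set st1 := (cfold _ (P w) st') in P1 P2 P3 P4 P5 P6 P7 *.
case Est1 : st1 => [s1 c1]; rewrite Est1 /= in P1 P2 P3 P4 P5 P6 P7.
have [F1 F2 F3 F4 F5] := P5.
have HT1 : TInv s1 (fun _ => hd st) by apply: TInv_frame P5 _; exact: HTI.
rewrite F5.
set L := tix st' w.
have HL : forall j, count_mem j L = [&& elig j, rem w & w \in tesc j] by move=> j; apply: HT.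
have HuL : uniq L.
  apply: count_mem_uniq => j; rewrite HL -cnt_pos HL; by case: (_ && _).
have HmL : forall j, j \in L -> elig j /\ w \in tesc j.
  by move=> j; rewrite -cnt_pos HL; case: (elig j) => //=; case: (rem w) => //=; case: (w \in tesc j).
apply: (@cfold_indG _ _ (htan own tv tsig p) L s1
  (fun l1 s c => [/\ reach (A, none) (abs s), StructInv s, (forall u, PV s (hd st') u), hd s =1 hd st' &
     [/\ TInv s (fun j => if j \in l1 then hd st' else hd st), Frame2 s1 s,
         forall (R : pred 'I_n) wt, (forall x, rem x -> R x) -> Psi R wt s = Psi R wt s1
       & c + TP s = TP s1 + size l1]])).
- split=> //; split=> //; by rewrite add0n addn0.
- move=> l1 j l2 s c El [R1 R2 R3 R4 [R5 R6 R7 R8]].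
  have Hnj : j \notin l1 by move: HuL; rewrite El cat_uniq /= negb_or => /and3P [_ /andP []].
  have [Hej Hwj] : elig j /\ w \in tesc j by apply: HmL; rewrite El mem_cat mem_head orbT.
  have HfJ : forall x, (fun j0 => if j0 \in l1 then hd st' else hd st) j x = hd st x.
    by move=> x /=; rewrite (negbTE Hnj).
  have [Q1 Q2 Q3 Q4 [Q5 Q6 Q7 Q8]] := htan_ok HH Hrw HHw Hej Hwj HfJ R1 R2 R3 R4 R5.
  split=> //; split.
  + apply: Q5 => [x|i Hij x]; first by rewrite mem_rcons mem_head.
    by rewrite mem_rcons in_cons (negbTE Hij).
  + have [G1 G2 G3] := R6; have [K1 K2 K3] := Q6; split; auto; by rewrite K3.
  + by move=> R wt HR; rewrite Q7 // R7.
  + rewrite size_rcons; move: Q8 R8; lia.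
- move=> [R1 R2 R3 R4 [R5 R6 R7 R8]].
  case Ec: (cfold (htan own tv tsig p) L s1) R1 R2 R3 R4 R5 R6 R7 R8 => [s2 c2] /= R1 R2 R3 R4 R5 R6 R7 R8.
  have [G1 G2 G3] := R6.
  split.
  + split=> //.
    * split; first by move=> v /HA /F1 /G1.
      by move=> j x; rewrite G3 F5; apply: HT.
    * by move=> u; apply: PV_irrel (R3 u) => x _; rewrite R4.
    * apply: TInv_irrel R5 => j Hj x Hx; rewrite R4.
      case: ifP => // HjL; rewrite HH; case: (x =P w) => [E|]; last by rewrite orbF.
      by move: HjL; rewrite -cnt_pos HL Hj Hrw -E Hx.
  + by rewrite G3 F5.
  + rewrite /Phi /mu R7 // P6 // [in RHS](Psi_pop _ _ Eq).
    have E1 : TP s1 = TP st by rewrite /TP F4.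
    have E2 : size (tix st w) = size L by [].
    rewrite P7 /st'; move: R8; rewrite E1 -E2 /=; lia.
  + by rewrite /mu R7 // P6 // (Psi_pop _ _ Eq) /st'; lia.
Qed.

Lemma process_ok fuel st : Inv st -> mu st < fuel ->
  let r := process own tv tsig P rem p fuel st in
  [/\ Inv r.1, que r.1 = [::], tix r.1 = tix st & r.2 + Phi (tix st) r.1 = Phi (tix st) st + 1].
Proof.
elim: fuel st => [|f IH] st HI Hmu //=.
case Eq: (que st) => [|w q] /=; first by split=> //; rewrite add1n addn1.
have [H1 H2 H3 H4] := handle_ok Eq HI.
case Eh: (handle own tv tsig P rem p w (set_que st q)) H1 H2 H3 H4 => [s1 c1] /= H1 H2 H3 H4.
have Hm1 : mu s1 < f by move: Hmu H4; lia.
have := IH s1 H1 Hm1.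
case Ep: (process own tv tsig P rem p f s1) => [s2 c2] /= [G1 G2 G3 G4].
split=> //; first by rewrite G3.
by move: G4 H3; rewrite H2; lia.
Qed.

Lemma saturated st : Inv st -> que st = [::] ->
  forall Z' s', step (abs st) (Z', s') -> Z' = Zs st /\ s' =1 sgm st.
Proof.
move=> [Hr Hs [HA HT] HPV [T1 T2 T3]] Eq Z' s' Hst.
have Hhd : forall x, hd st x = inZ st x by move=> x; rewrite /hd Eq andbT.
have [S1 S2 S3 S4 S5] := Hs.
move: Hst; move E1: (abs st) => ast; move E2: (Z', s') => ast' Hst.
case: Hst E1 E2.
- move=> Z s v u Hv Hnv Ho Hu Hsu [EZ Es] _; exfalso.
  have [HV _] := HPV v.
  have Hzv : ~~ inZ st v by move: Hnv; rewrite -EZ inE.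
  have Hrv : rem v by move: Hv; rewrite inE.
  have := HV Hrv Hzv; rewrite /VInv Ho eqxx => /(_ u Hsu).
  by rewrite Hhd; move: Hu; rewrite -EZ inE => ->.
- move=> Z s v Hv Hnv Ho Hall [EZ Es] _; exfalso.
  have [HV _] := HPV v.
  have Hzv : ~~ inZ st v by move: Hnv; rewrite -EZ inE.
  have Hrv : rem v by move: Hv; rewrite inE.
  have := HV Hrv Hzv; rewrite /VInv Ho; case: (odd p) => /= -[Hc Hc0];
  move: Hc0; rewrite Hc -has_count => /hasP [x Hx /andP [Hrx]];
  by rewrite Hhd; have := Hall x; rewrite -EZ !inE => /(_ Hrx Hx) ->.
- move=> Z s v u Hv Ho Hsv Hu Hsu [EZ Es] _; exfalso.
  have [_ HJ] := HPV v.
  have Hsv' : sgm st v = None by rewrite Es.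
  have [_ HH] := HJ (HA v Hv) Ho Hsv'.
  by have := HH u Hsu; rewrite Hhd; move: Hu; rewrite -EZ inE => ->.
- move=> Z s i Hsub Ho Hne Hesc0 [EZ Es] [E1 E2].
  have Hei : elig i by rewrite /elig Hsub Ho eqxx.
  have Hhas : has rem (tesc i).
    have /set0Pn [x] := Hne; rewrite esc_elig // => /andP [Hrx Hx]; apply/hasP; by exists x.
  have Hc0 : count (fun x => rem x && ~~ hd st x) (tesc i) = 0.
    apply/eqP; rewrite -leqn0 leqNgt -has_count; apply/hasPn => x Hx /=.
    apply/negP => /andP [Hrx]; rewrite Hhd => /negP; apply.
    have := subsetP Hesc0 x; rewrite esc_elig // Hrx Hx -EZ inE; by apply.
  have Hta : ~~ tact st i by apply/negP => /T2 [_ _]; rewrite T1 // Hc0.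
  have HF := T3 i Hei Hhas Hta.
  split.
  + rewrite E1 -EZ; apply/setUidPr/subsetP => v; rewrite !inE => /HF [] //.
  + move=> v; rewrite E2 -Es /=; case: ifP => // /and3P [Hv Hov Hn].
    have Hv' : v \in tv i by move: Hv; rewrite inE.
    by have [_ /(_ (eqP Hov))] := HF v Hv'; rewrite Hn.
Qed.

Lemma Psi_le (R : pred 'I_n) wt st : StructInv st -> Psi R wt st <= \sum_v wt v.
Proof.
move=> [S1 S2 S3 S4 S5]; rewrite /Psi (big_uniq _ S4) !big_mkcond [X in _ + X]big_mkcond -big_split /=.
apply: leq_sum => v _; case Hq: (v \in que st); last by rewrite addn0; case: ifP.
by rewrite (S5 v Hq) andbF add0n.
Qed.

Lemma mu_le st : StructInv st -> mu st <= n.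
Proof. by move=> Hs; rewrite (leq_trans (Psi_le _ _ Hs)) // sum1_card card_ord. Qed.

Lemma maxpr_val : (maxpr pr rem).1 = prmax pr U.
Proof.
rewrite /maxpr cfold_fst foldl_max max0n /prmax big_enum_cond /=.
by apply: eq_bigl => v; rewrite !inE.
Qed.

Lemma foldl_updf (T : eqType) (r0 : T -> bool) (l : seq T) v :
  foldl (fun r x => updf r x false) r0 l v = r0 v && (v \notin l).
Proof.
elim: l r0 => [|x l IH] r0 /=; first by rewrite andbT.
rewrite IH /updf in_cons negb_or; case: (v =P x) => //=; by rewrite andbF.
Qed.

Lemma region_ok (Hp : p = prmax pr U) (Hgood : forall v, rem v -> has rem (succ v))
  (HsP : \sum_v size (P v) = nedges succ) :
  let x := region own pr succ tv tesc tsig P rem in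
  [/\ tattr own pr succ tv tsig U [set v in U | pr v == prmax pr U] (odd (prmax pr U))
        [set v in x.1.1.1] x.1.1.2,
      forall v, x.1.2 v = rem v && (v \notin x.1.1.1),
      (forall v, v \in x.1.1.1 -> rem v) /\ (forall v, rem v -> pr v = p -> v \in x.1.1.1),
      forall v, x.1.2 v -> has x.1.2 (succ v) &
      x.2 <= 5 * (n + nedges succ + k + k * n) + 1].
Proof.
rewrite /region.
have Hmp : maxpr pr rem = (p, n).
  rewrite [maxpr _ _]surjective_pairing maxpr_val -Hp; congr pair.
  by rewrite /maxpr cfold_cost0 // size_enum_ord.
rewrite Hmp.
case Ei: (init_vertices pr succ rem p (st0 n k)) => [st1 c1].
have [I1 I2 [I3 [I4 [I5 I6]]] [I7 [I8 I9]] I10] := init_vertices_spec Ei.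
case Et: (init_tangles pr tv tesc rem p st1) => [st2 c2].
have [[K1 [K2 [K3 [K4 K5]]]] K6 K7 K8 [K9 K10]] := init_tangles_spec Et I4 I5 I6.
have Hhd2 : forall x, hd st2 x = false.
  move=> x; rewrite /hd K4 K1; case Hz: (inZ st1 x) => //=.
  have E := I9 x; rewrite Hz in E; exact: (congr1 negb E).
have HI : Inv st2.
  split.
  - have -> : abs st2 = (A, none).
      rewrite /abs K2 I3; congr pair; apply/setP => v; by rewrite !inE K1 I1.
    exact: AttrRefl.
  - split; rewrite ?K1 ?K4 ?K5 -?I7 //.
    + by move=> v; rewrite I1 => /andP [].
    + by move=> v; rewrite I9.
  - split; last exact: K6.
    by move=> v; rewrite K1 I1 inE.
  - move=> u; split.
    + move=> Hru Hzu; rewrite /VInv; case: ifP => _; first by move=> x _; rewrite Hhd2.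
      rewrite K3 (I2 u Hru); split; first by apply: eq_count => x /=; rewrite Hhd2 andbT.
      by rewrite -has_count; apply: Hgood.
    + move=> Hz _ _; split; first by move: Hz; rewrite K1 I1 inE.
      by move=> x _; rewrite Hhd2.
  - split.
    + by move=> j Hj; rewrite K7 //; apply: eq_count => x /=; rewrite Hhd2 andbT.
    + move=> j; rewrite K8 => /andP [Hj Hc]; split=> //; first by rewrite has_count lt0n.
      by rewrite K7 // lt0n.
    + by move=> j Hj Hh; rewrite K8 Hj /= -lt0n -has_count Hh.
have R2' : StructInv st2 by case: HI.
have Hmu : mu st2 < n.+1 by rewrite ltnS mu_le.
have := process_ok HI Hmu.
case Ep: (process own tv tsig P rem p n.+1 st2) => [st3 c3] /= [Q1 Q2 Q3 Q4].
case Er: (cfold (fun r v => (updf r v false, 0)) (reg st3) rem) => [rem' c4].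
have Erem : forall v, rem' v = rem v && (v \notin reg st3).
  by move=> v; have := congr1 fst Er; rewrite cfold_fst /= => <-; rewrite foldl_updf.
have Ec4 : c4 = size (reg st3) by have := congr1 snd Er; rewrite cfold_cost0.
have [R1 R2 [R3 R4] R5 R6] := Q1.
have [S1 S2 S3 S4 S5] := R2.
have Hhd3 : forall x, hd st3 x = inZ st3 x by move=> x; rewrite /hd Q2 andbT.
rewrite /=; split.
- rewrite -Hp.
  have -> : [set v in U | pr v == p] = A by apply/setP => v; rewrite !inE.
  have -> : [set v in reg st3] = Zs st3 by apply/setP => v; rewrite !inE S3.
  split; first exact: R1.
  exact: saturated Q1 Q2.
- exact: Erem.
- split; first by move=> v; rewrite S3; apply: S1.
  by move=> v Hv Hpv; rewrite S3; apply: R3; rewrite inE Hv Hpv eqxx.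
- move=> v; rewrite Erem S3 => /andP [Hrv Hzv].
  have [HV _] := R5 v; have := HV Hrv Hzv; rewrite /VInv; case: ifP => _.
  + move=> Hn; have /hasP [x Hx Hrx] := Hgood v Hrv; apply/hasP; exists x => //.
    by rewrite Erem S3 Hrx -Hhd3 Hn.
  + move=> [Hc Hc0]; move: Hc0; rewrite Hc -has_count => /hasP [x Hx Hrx].
    by apply/hasP; exists x => //; rewrite Erem S3 -Hhd3.
-
  set m := nedges succ.
  have Hc1 : c1 <= m + n.
    rewrite I10 leq_add2r /m /nedges; apply: leq_sum => v _; by case: ifP.
  have Htv : \sum_j size (tv j) <= k * n.
    rewrite (@leq_trans (\sum_(j < k) n)) //; last by rewrite sum_nat_const card_ord.
    by apply: leq_sum => j _; apply: uniq_size_le.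
  have Htesc : \sum_j size (tesc j) <= k * n.
    rewrite (@leq_trans (\sum_(j < k) n)) //; last by rewrite sum_nat_const card_ord.
    by apply: leq_sum => j _; apply: uniq_size_le.
  have Hc2 : c2 <= 3 * (k * n) + k.
    rewrite (leq_trans K10) //.
    rewrite (@leq_trans (\sum_(j < k) (3 * n + 1))) //.
      apply: leq_sum => j _; have := uniq_size_le (Hutv j); have := uniq_size_le (Huesc j); lia.
    rewrite sum_nat_const card_ord; lia.
  have HTP : TP st2 <= \sum_j size (tv j).
    rewrite /TP big_mkcond /=; apply: leq_sum => j _; by case: ifP.
  have Hwt : \sum_v (size (P v) + size (tix st2 v)).+1 <= m + k * n + n.
    have -> : \sum_v (size (P v) + size (tix st2 v)).+1 =
              \sum_v size (P v) + \sum_v size (tix st2 v) + n.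
      rewrite (eq_bigr (fun v => size (P v) + size (tix st2 v) + 1)); last by move=> v _; rewrite addn1.
      by rewrite !big_split /= sum1_card card_ord.
    by rewrite HsP; move: K9 Htesc; lia.
  have HPhi : Phi (tix st2) st2 <= m + k * n + n + k * n.
    rewrite /Phi; apply: leq_add; last exact: leq_trans HTP Htv.
    by apply: leq_trans (Psi_le _ _ R2') Hwt.
  have Hc3 : c3 <= m + k * n + n + k * n + 1.
    by move: Q4 HPhi; lia.
  have Hc4 : c4 <= n by rewrite Ec4; apply: uniq_size_le.
  by move: Hc1 Hc2 Hc3 Hc4; lia.
Qed.
End Region.

Definition RB := 5 * (n + nedges succ + k + k * n) + 1 + n + 1.

Lemma td_ok P (HP : forall v u, count_mem u (P v) = count_mem v (succ u))
  (HsP : \sum_v size (P v) = nedges succ) :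
  forall f rem b, #|[set v | rem v]| < f -> (forall v, rem v -> has rem (succ v)) ->
  (forall v, rem v -> pr v < b) ->
  let r := td_loop own pr succ tv tesc tsig f P rem in
  topdown own pr succ tv tsig [set v | rem v] r.1 /\ r.2 <= (0 < n) * (b * RB) + n + 1.
Proof.
elim=> [|f IH] rem b Hf Hgood Hb //=.
case Ene: (cfold (fun b v => (b || rem v, 0)) (enum 'I_n) false) => [ne c0].
have Ene' : ne = has rem (enum 'I_n) by have := congr1 fst Ene; rewrite cfold_fst foldl_has.
have Ec0 : c0 = n by have := congr1 snd Ene; rewrite cfold_cost0 // size_enum_ord.
case: ifP => Hne.
- have E0 : [set v | rem v] = set0.
    apply/setP => v; rewrite !inE; apply/negbTE; move: Hne; rewrite Ene' => /hasPn.
    by apply; rewrite mem_enum.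
  rewrite E0; split; first exact: TDnil.
  by rewrite Ec0 /= addn1 ltnS leq_addl.
- move/negbFE: Hne; rewrite Ene' => /hasP [v0 _ Hv0].
  have Hn0 : 0 < n by apply: leq_ltn_trans (leq0n v0) (ltn_ord v0).
  set p := prmax pr (U rem).
  have [R1 R2 [R3 R4] R5 R6] := @region_ok P rem p HP (erefl p) Hgood HsP.
  case Er: (region own pr succ tv tesc tsig P rem) R1 R2 R3 R4 R5 R6 => [[[r s] rem'] c1] /= R1 R2 R3 R4 R5 R6.
  have Hcard : 0 < #|U rem| by apply/card_gt0P; exists v0; rewrite inE.
  have [vm Hvm Evm] := eq_bigmax_cond pr Hcard.
  have Hpm : p = pr vm by rewrite -Evm.
  have Hrvm : rem vm by move: Hvm; rewrite inE.
  have Hle : forall v, rem v -> pr v <= p.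
    by move=> v Hv; rewrite /p /prmax; apply: leq_bigmax_cond; rewrite inE.
  have Hf' : #|[set v | rem' v]| < f.
    suff Hpr : [set v | rem' v] \proper [set v | rem v] by have := proper_card Hpr; move: Hf; lia.
    apply/properP; split.
    + by apply/subsetP => v; rewrite !inE R2 => /andP [].
    + exists vm; first by rewrite inE.
      by rewrite inE R2 (R4 vm Hrvm (esym Hpm)) andbF.
  have Hb' : forall v, rem' v -> pr v < p.
    move=> v; rewrite R2 => /andP [Hv Hnr]; rewrite ltn_neqAle Hle // andbT.
    by apply/eqP => E; move: Hnr; rewrite (R4 v Hv E).
  have := IH rem' p Hf' R5 Hb'.
  case Et: (td_loop own pr succ tv tesc tsig f P rem') => [rest c2] /= [T1 T2].
  split.
  + apply: TDcons; first by apply/set0Pn; exists v0; rewrite inE.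
    * exact: R1.
    * have -> : [set v | rem v] :\: [set x in r] = [set v | rem' v].
        by apply/setP => v; rewrite !inE R2 andbC.
      exact: T1.
  + rewrite Hn0 mul1n in T2 *; rewrite Ec0.
    have Hpb : p < b by rewrite Hpm; apply: Hb.
    have Hbp : p.+1 * RB <= b * RB by apply: leq_mul.
    have ERB : RB = 5 * (n + nedges succ + k + k * n) + 1 + n + 1 := erefl.
    move: Hbp; rewrite mulSn; move: ERB R6 T2; lia.
Qed.
End Main.

Theorem lemma11 :
  exists C : nat,
  forall (n k d : nat) (own : 'I_n -> bool) (pr : 'I_n -> nat)
         (succ : 'I_n -> seq 'I_n) (tv tesc : 'I_k -> seq 'I_n)
         (tsig : 'I_k -> 'I_n -> 'I_n),
    valid_game pr succ d ->
    valid_tangles own pr succ tv tsig tesc ->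
    let (out, cost) := topdown_alg own pr succ tv tesc tsig in
    topdown own pr succ tv tsig [set: 'I_n] out /\
    cost <= C * (d.+1 * nedges succ + d.+1 * n * k) + C.
Proof.
exists 28 => n k d own pr succ tv tesc tsig [Hpr [Hne Hus]] [Hvt Hinj].
have Hutv : forall i, uniq (tv i) by move=> i; case: (Hvt i).
have Huesc : forall i, uniq (tesc i) by move=> i; case: (Hvt i).
have Hesc : forall i, [set x in tesc i] =
  tangle_esc own succ setT (tset tv i) (odd (prmax pr (tset tv i))) by move=> i; case: (Hvt i).
rewrite /topdown_alg.
have [HP [HsP Hc0]] := preds_spec succ.
case Ep: (preds_comp succ) HP HsP Hc0 => [P c0] HP HsP Hc0; rewrite /= in HP HsP Hc0.
have Hcard : #|[set v : 'I_n | true]| < n.+1 by rewrite cardsT card_ord.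
have Hgood : forall v : 'I_n, true -> has (fun _ => true) (succ v).
  by move=> v _; have := Hne v; case: (succ v).
have Hb : forall v : 'I_n, true -> pr v < d.+1 by move=> v _; rewrite ltnS.
have := @td_ok n k own pr succ tv tesc tsig Hutv Huesc Hus Hesc P HP HsP n.+1 (fun _ => true) d.+1 Hcard Hgood Hb.
case Et: (td_loop own pr succ tv tesc tsig n.+1 P (fun _ => true)) => [out c1] /= [T1 T2].
split.
- have -> : [set: 'I_n] = [set v : 'I_n | true] by apply/setP => v; rewrite !inE.
  exact: T1.
- set m := nedges succ.
  have Hnm : n <= m.
    rewrite /m /nedges -[n in n <= _]card_ord -sum1_card; apply: leq_sum => v _.
    by have := Hne v; case: (succ v).
  have -> : d.+1 * m + d.+1 * n * k = d.+1 * (m + n * k) by rewrite mulnDr mulnA.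
  set X := m + n * k.
  have HmX : m <= X by rewrite leq_addr.
  have HXd : X <= d.+1 * X by rewrite leq_pmull.
  rewrite Hc0.
  case: (posnP n) => [Hn0|Hn0].
  + have Hf : (0 < n) = false by rewrite Hn0.
    rewrite Hf mul0n add0n in T2; move: T2 HmX HXd Hn0; lia.
  + rewrite Hn0 mul1n in T2.
    have Hk : k <= n * k by rewrite leq_pmull.
    have HRB : RB k succ <= 23 * X.
      rewrite /RB -/m; move: Hnm Hk Hn0; rewrite /X; lia.
    have H2 : d.+1 * RB k succ <= d.+1 * (23 * X) by rewrite leq_mul2l HRB orbT.
    rewrite mulnCA in H2.
    move: T2 H2 HmX HXd Hnm; lia.
Qed.
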